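(* For all integers $h \ge 2$ and $k \ge 3$, $hk \in \mathcal{R}_{\mathbf{Z}}(h,k)$.
   Context: For a positive integer $h$ and a finite set $A$ of integers, $hA$ denotes the set of all sums $a_1+\cdots+a_h$ with $a_1,\ldots,a_h \in A$ (not necessarily distinct). The sumset size set is $\mathcal{R}_{\mathbf{Z}}(h,k) = \{ |hA| : A \subseteq \mathbf{Z},\ |A| = k\}$. *)

(* Defs.v *)
From mathcomp Require Import all_boot all_order all_algebra.
Set Implicit Arguments. Unset Strict Implicit. Unset Printing Implicit Defensive.
Import GRing.Theory Num.Theory.
Local Open Scope ring_scope.

(* A finite set of integers is represented by a duplicate-free list [A : seq int]. *)

Fixpoint hfold (A : seq int) (h : nat) : seq int :=
  match h with
  | O => [:: 0]
  | S h' => [seq a + s | a <- A, s <- hfold A h']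
  end.

Definition sumset (h : nat) (A : seq int) : seq int := undup (hfold A h).

(* Membership of n in R_Z(h,k) = { |hA| : A subset Z, |A| = k }. *)
Definition in_RZ (h k n : nat) : Prop :=
  exists A : seq int, uniq A /\ size A = k /\ size (sumset h A) = n.

(* Main.v *)
Require Import Defs.
From mathcomp Require Import all_boot all_order all_algebra.
From mathcomp Require Import zify.
Set Implicit Arguments. Unset Strict Implicit. Unset Printing Implicit Defensive.
Import GRing.Theory Num.Theory.

Lemma mem_iotaZ (m : nat) (n : int) :
  (n \in [seq Posz i | i <- iota 0 m]) = ((0 <= n) && (n < Posz m))%R.
Proof.
case: n => p.
  rewrite (mem_map (fun a b (e : Posz a = Posz b) => congr1 absz e)) mem_iota.
  apply/idP/idP; lia.
have -> : (Negz p \in [seq Posz i | i <- iota 0 m]) = false.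
  by apply/negP; case/mapP.
lia.
Qed.

Definition AA (k : nat) : seq int := [seq Posz i | i <- iota 0 (k - 1)] ++ [:: Posz k].

Lemma memAA k a : (3 <= k)%N ->
  (a \in AA k) = (((0 <= a) && (a <= Posz k - 2)) || (a == Posz k))%R.
Proof.
move=> hk; rewrite /AA mem_cat mem_iotaZ mem_seq1.
apply/idP/idP; lia.
Qed.

Lemma memH k h n : (3 <= k)%N ->
  (n \in hfold (AA k) h) =
   (((0 <= n) && (n <= Posz (h * k) - 2)) || (n == Posz (h * k)))%R.
Proof.
move=> hk; elim: h n => [|h IH] n /=.
  rewrite mem_seq1; apply/idP/idP; lia.
apply/allpairsP/idP.
  move=> [[a s] /= [Ha Hs ->]].
  move: Ha Hs; rewrite memAA // IH; lia.
move=> H.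
have [h0|hpos] := posnP h.
  subst h; exists (n, 0%R) => /=; split.
  - rewrite memAA //; lia.
  - rewrite IH; lia.
  - by rewrite addr0.
case/orP: H => H.
  have [Hn|Hn] := boolP (n <= Posz k - 2)%R.
    exists (n, 0%R) => /=; split.
    - rewrite memAA //; lia.
    - rewrite IH; lia.
    - by rewrite addr0.
  have [Hn2|Hn2] := boolP (n == Posz k - 1)%R.
    exists (Posz k - 2, 1)%R => /=; split.
    - rewrite memAA //; lia.
    - rewrite IH; lia.
    - lia.
  exists (Posz k, n - Posz k)%R => /=; split.
  - rewrite memAA //; lia.
  - rewrite IH; lia.
  - lia.
exists (Posz k, Posz (h * k))%R => /=; split.
- rewrite memAA //; lia.
- rewrite IH; lia.
- lia.
Qed.

Theorem mainTheorem9 (h k : nat) : (2 <= h)%N -> (3 <= k)%N -> in_RZ h k (h * k).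
Proof.
move=> hh hk; exists (AA k); split; [|split].
- rewrite /AA cat_uniq /= andbT map_inj_uniq ?iota_uniq;
    last by move=> a b e; case: e.
  rewrite mem_iotaZ; lia.
- rewrite /AA size_cat size_map size_iota /=; lia.
- set T := [seq Posz i | i <- iota 0 (h * k - 1)] ++ [:: Posz (h * k)].
  have uT : uniq T.
    rewrite /T cat_uniq /= andbT map_inj_uniq ?iota_uniq;
      last by move=> a b e; case: e.
    rewrite mem_iotaZ; lia.
  have -> : size (sumset h (AA k)) = size T.
    apply: perm_size; apply: uniq_perm; rewrite ?undup_uniq //.
    move=> n; rewrite mem_undup memH // /T mem_cat mem_iotaZ mem_seq1.
    apply/idP/idP; lia.
  rewrite /T size_cat size_map size_iota /=; lia.
Qed.
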